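(* Suppose $\tilde B$ has nondegenerate coefficients. Then $\{\vartheta_m:m\in M^\circ_{\mathrm{uf}}\}$ is a reduced basis for the small canonical algebra $\underline{\mathrm{can}}(\tilde B)$.
   Context: Setup. $\Bbbk$ a field of characteristic $0$; $I$ finite, $I_{\mathrm{uf}}\subseteq I$, $I_{\mathrm{fr}}=I\setminus I_{\mathrm{uf}}$; $\tilde B=[\epsilon_{ij}]_{i\in I_{\mathrm{uf}},j\in I}$ an integer matrix with skew-symmetrizable square part $B$ (positive integers $d_i$, $d_i\epsilon_{ij}=-d_j\epsilon_{ji}$). $N_{\mathrm{uf}}$ lattice with basis $(e_i)_{i\in I_{\mathrm{uf}}}$ (componentwise order; $N^{0+}_{\mathrm{uf}}$ nonnegative elements, $N^+_{\mathrm{uf}}=N^{0+}_{\mathrm{uf}}\setminus\{0\}$), $M^\circ_{\mathrm{uf}}$ lattice with basis $(f_i)$, $V^*=M^\circ_{\mathrm{uf}}\otimes\mathbb R$, $\langle f_i,e_j\rangle=\delta_{ij}/d_i$. For $n=\sum a_ie_i$, $nB=\sum a_i\epsilon_{ij}f_j$. Indeterminates $(z_i)_{i\in I}$, $z^m=\prod z_i^{c_i}$ for $m=\sum c_if_i$; $\sigma_i=\prod_{j\in I_{\mathrm{fr}}}z_j^{\epsilon_{ij}}$, $\zeta_i=\prod_{j\in I}z_j^{\epsilon_{ij}}$; $\sigma^n=\prod\sigma_i^{a_i}$, $\zeta^n=\prod\zeta_i^{a_i}$; $\zeta^n=z^{nB}\sigma^n$. $\tilde B$ has nondegenerate coefficients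 if the rows of $[\epsilon_{ij}]_{i\in I_{\mathrm{uf}},j\in I_{\mathrm{fr}}}$ are linearly independent. Theta functions: $\vartheta_m$ ($m\in M^\circ_{\mathrm{uf}}$) is the theta function of Gross–Hacking–Keel–Kontsevich for the cluster scattering diagram of $\tilde B$ with generic basepoint in the positive orthant, constructed in $V^*$ as a sum over broken lines; the facts used are that $\vartheta_m=z^mF_m$ with $F_m\in\Bbbk[[\zeta]]$ of constant term $1$, and that products expand as $\vartheta_{p_1}\vartheta_{p_2}=\sum_m a(p_1,p_2,m)\vartheta_m$ (a convergent sum) with each $a(p_1,p_2,m)$ a formal power series in $(\sigma_i)$ with nonnegative integer coefficients. Small canonical algebra. $\Bbbk((\zeta))$ is the ring of formal series $\sum_{n\in N_{\mathrm{uf}}}c_n\zeta^n$ whose support has a componentwise lower bound. $\mathcal A=\bigoplus_{m\in M^\circ_{\mathrm{uf}}}z^m\Bbbk((\zeta))$ with the obvious multiplication (identified, by nondegeneracy, with series of Laurent monomials in $z$); for $v\in z^m\Bbbk((\zeta))$ set $\mathbf g(v)=m$ (so $\mathbf g(\sigma^n)=-nB$). $\underline{\mathrm{can}}(\tilde B)$ is the $\Bbbk[\sigma^{\pm1}]$-subalgebra of $\mathcal A$ generated by all $\vartheta_m$. A sequence in $\Bbbk((\zeta))$ converges if all its terms' supports have a common componentwise lower bound and each coefficient eventually stabilizes; a sequence $(v_k)$ in $\mathcal A$ converges if only finitely many $m$ occur with nonzero component in any $v_k$ and each component sequence converges in $\Bbbk((\zeta))$; a series converges if its partial sums do (independent of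 ordering). A countable subset $\overline{\mathcal U}\subseteq\underline{\mathrm{can}}(\tilde B)$ is a basis if every $v\in\underline{\mathrm{can}}(\tilde B)$ equals $\sum_{u}a_uu$ (convergent) for a unique function $u\mapsto a_u\in\Bbbk$. A reduced basis is a subset $\{u_m:m\in M^\circ_{\mathrm{uf}}\}\subseteq\underline{\mathrm{can}}(\tilde B)$ with each $u_m\in z^m\Bbbk[[\zeta]]$ having constant coefficient $1$, such that $\{\sigma^nu_m:n\in N_{\mathrm{uf}},m\in M^\circ_{\mathrm{uf}}\}$ is a basis. *)

(* Defs.v *)
From mathcomp Require Import all_boot all_order all_algebra.
Set Implicit Arguments. Unset Strict Implicit. Unset Printing Implicit Defensive.
Import Order.TTheory GRing.Theory Num.Theory.
Local Open Scope ring_scope.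

(* I_uf = 'I_k, I_fr = 'I_l.  Both lattices M^o_uf (basis f_i) and N_uf
   (basis e_i) are represented as integer row vectors 'rV[int]_k.
   B : 'M[int]_k is the square part [eps_ij]_{i,j in I_uf},
   Bfr : 'M[int]_(k,l) is the frozen part [eps_ij]_{i in I_uf, j in I_fr}.
   For n in N_uf, nB = n *m B. *)
Definition latt (k : nat) := 'rV[int]_k.

Definition leN (k : nat) (a b : latt k) : bool := [forall i, a 0 i <= b 0 i].

Definition skew_symmetrizable (k : nat) (B : 'M[int]_k) (d : 'I_k -> nat) :=
  (forall i, (0 < d i)%N) /\ (forall i j, (d i)%:Z * B i j = - ((d j)%:Z * B j i)).

Definition nondegenerate_coeffs (k l : nat) (Bfr : 'M[int]_(k, l)) :=
  forall n : 'rV[int]_k, n *m Bfr = 0 -> n = 0.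

(* An element of A = (+)_m z^m k((zeta)) is recorded by its coefficient
   function: v m n = coefficient of z^m zeta^n. *)
Definition Aelt (K : fieldType) (k : nat) := latt k -> latt k -> K.

Definition mono (K : fieldType) (k : nat) (g n : latt k) (c : K) : Aelt K k :=
  fun m' n' => if (m' == g) && (n' == n) then c else 0.

Definition addA (K : fieldType) (k : nat) (u v : Aelt K k) : Aelt K k :=
  fun m n => u m n + v m n.

Definition scaleA (K : fieldType) (k : nat) (c : K) (v : Aelt K k) : Aelt K k :=
  fun m n => c * v m n.

(* multiplication by the monomial z^g zeta^n *)
Definition shiftA (K : fieldType) (k : nat) (g n : latt k) (v : Aelt K k) : Aelt K k :=
  fun m' n' => v (m' - g) (n' - n).

(* sigma^n = z^{-nB} zeta^n *)
Definition sigmaA (K : fieldType) (k : nat) (B : 'M[int]_k) (n : latt k) : Aelt K k :=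
  mono (- (n *m B)) n 1.

(* Convergent (order-independent) summation of a family in A, following the
   definition of convergence: finitely many g-components overall, a common
   componentwise lower bound on zeta-supports, and each coefficient receives
   only finitely many nonzero contributions, whose sum is the coefficient of
   the limit. *)
Definition sums_to (K : fieldType) (k : nat) (J : eqType) (x : J -> Aelt K k)
    (s : Aelt K k) : Prop :=
  (exists S : seq (latt k), forall j m n, x j m n != 0 -> m \in S) /\
  (exists L : latt k, forall j m n, x j m n != 0 -> leN L n) /\
  (forall m n, exists F : seq J,
      [/\ uniq F, (forall j, x j m n != 0 -> j \in F) &
          s m n = \sum_(j <- F) x j m n]).

Definition is_prod (K : fieldType) (k : nat) (u v w : Aelt K k) : Prop :=
  sums_to (fun p : (latt k * latt k) * (latt k * latt k) =>
             mono (p.1.1 + p.2.1) (p.1.2 + p.2.2) (u p.1.1 p.1.2 * v p.2.1 p.2.2))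
          w.

Definition in_zm_series (K : fieldType) (k : nat) (m : latt k) (v : Aelt K k) :=
  forall m' n, v m' n != 0 -> m' = m /\ leN 0 n.

(* The small canonical algebra: the k[sigma^{+-1}]-subalgebra of A generated
   by the theta functions. *)
Inductive in_can (K : fieldType) (k : nat) (B : 'M[int]_k)
    (theta : latt k -> Aelt K k) : Aelt K k -> Prop :=
| can_theta m : in_can B theta (theta m)
| can_sigma n : in_can B theta (sigmaA K B n)
| can_scale (c : K) v : in_can B theta v -> in_can B theta (scaleA c v)
| can_add u v : in_can B theta u -> in_can B theta v -> in_can B theta (addA u v)
| can_mul u v w : in_can B theta u -> in_can B theta v -> is_prod u v w ->
                  in_can B theta w.

(* The facts about the GHKK theta functions used in the paper:
   theta_m = z^m F_m with F_m in k[[zeta]] of constant term 1, and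
   theta_p1 theta_p2 = sum_m a(p1,p2,m) theta_m (convergent), with
   a(p1,p2,m) = sum_{n >= 0} c(p1,p2,m,n) sigma^n, c(...) in Z_{>=0}. *)
Definition theta_props (K : fieldType) (k : nat) (B : 'M[int]_k)
    (theta : latt k -> Aelt K k) : Prop :=
  (forall m, in_zm_series m (theta m) /\ theta m m 0 = 1) /\
  exists c : latt k -> latt k -> latt k -> latt k -> nat,
    forall p1 p2,
      (forall m n, (c p1 p2 m n != 0)%N -> leN 0 n) /\
      exists w, is_prod (theta p1) (theta p2) w /\
        sums_to (fun q : latt k * latt k =>
                   shiftA (- (q.2 *m B)) q.2
                          (scaleA (c p1 p2 q.1 q.2)%:R (theta q.1))) w.

(* {sigma^n u_m : n, m} is a basis of the algebra inC (indexed by pairs (m,n)). *)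
Definition is_basis_sigma (K : fieldType) (k : nat) (B : 'M[int]_k)
    (inC : Aelt K k -> Prop) (u : latt k -> Aelt K k) : Prop :=
  forall v, inC v ->
    exists a : latt k * latt k -> K,
      sums_to (fun q : latt k * latt k =>
                 shiftA (- (q.2 *m B)) q.2 (scaleA (a q) (u q.1))) v /\
      forall b : latt k * latt k -> K,
        sums_to (fun q : latt k * latt k =>
                   shiftA (- (q.2 *m B)) q.2 (scaleA (b q) (u q.1))) v ->
        forall q, b q = a q.

Definition reduced_basis (K : fieldType) (k : nat) (B : 'M[int]_k)
    (inC : Aelt K k -> Prop) (u : latt k -> Aelt K k) : Prop :=
  [/\ forall m, inC (u m),
      forall m, in_zm_series m (u m) /\ u m m 0 = 1
    & is_basis_sigma B inC u].

(* Main.v *)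
Require Import Defs.
From mathcomp Require Import all_boot all_order all_algebra.
From mathcomp Require Import zify.
Set Implicit Arguments. Unset Strict Implicit. Unset Printing Implicit Defensive.
Import GRing.Theory Num.Theory.
Local Open Scope ring_scope.

Lemma leN_refl k (x : latt k) : leN x x.
Proof. by apply/forallP => i. Qed.

Lemma leN_trans k (x y z : latt k) : leN x y -> leN y z -> leN x z.
Proof.
move=> /forallP H1 /forallP H2; apply/forallP => i; exact: Order.le_trans (H1 i) (H2 i).
Qed.

Lemma leN0B k (x y : latt k) : leN 0 (y - x) = leN x y.
Proof. by apply/forallP/forallP => H i; move: (H i); rewrite !mxE subr_ge0. Qed.

Definition minL k (a b : latt k) : latt k := \row_i Order.min (a 0 i) (b 0 i).

Lemma minL_l k (a b n : latt k) : leN a n -> leN (minL a b) n.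
Proof. move/forallP=> H; apply/forallP=> i; by rewrite mxE Order.TotalTheory.ge_min H. Qed.

Lemma minL_r k (a b n : latt k) : leN b n -> leN (minL a b) n.
Proof. move/forallP=> H; apply/forallP=> i; by rewrite mxE Order.TotalTheory.ge_min H orbT. Qed.

Definition depth k (L n : latt k) : nat := (\sum_(i < k) absz (n 0 i - L 0 i)%R)%N.

Lemma absz_le k (L x n : latt k) i : leN L x -> leN x n ->
  (absz (x 0 i - L 0 i)%R <= absz (n 0 i - L 0 i)%R)%N.
Proof.
move=> /forallP H1 /forallP H2.
rewrite -lez_nat !abszE !ger0_norm ?subr_ge0 ?lerD2r //.
by apply: Order.le_trans (H1 i) (H2 i).
Qed.

Lemma depth_le_term k (L n : latt k) i : (absz (n 0 i - L 0 i)%R <= depth L n)%N.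
Proof. by rewrite /depth (bigD1 i) //= leq_addr. Qed.

Lemma depth_lt k (L x n : latt k) : leN L x -> leN x n -> x != n -> (depth L x < depth L n)%N.
Proof.
move=> h1 h2 hne.
have [i0 hi0] : exists i, x 0 i != n 0 i.
  case: (boolP [exists i, x 0 i != n 0 i]) => [/existsP//|/existsPn H].
  by case/eqP: hne; apply/rowP => j; move/negPn/eqP: (H j).
have hs : (absz (x 0 i0 - L 0 i0)%R < absz (n 0 i0 - L 0 i0)%R)%N.
  move: h1 h2 => /forallP H1 /forallP H2.
  rewrite -ltz_nat !abszE !ger0_norm ?subr_ge0 ?ltrD2r //.
    by rewrite Order.POrderTheory.lt_neqAle hi0 H2.
  by apply: Order.POrderTheory.le_trans (H1 i0) (H2 i0).
rewrite /depth (bigD1 i0) //= [X in (_ < X)%N](bigD1 i0) //=.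
have : (\sum_(i < k | i != i0) absz (x 0 i - L 0 i)%R <= \sum_(i < k | i != i0) absz (n 0 i - L 0 i)%R)%N.
  by apply: leq_sum => i _; apply: absz_le.
by move=> h; rewrite -addSn; apply: leq_add.
Qed.

Definition box k (L n : latt k) : seq (latt k) :=
  undup [seq x <- map (fun f : {ffun 'I_k -> 'I_(depth L n).+1} =>
                   (\row_i (L 0 i + ((f i : nat)%:Z)) : latt k))
                 (enum {ffun 'I_k -> 'I_(depth L n).+1}) | leN L x && leN x n].

Arguments box : simpl never.
Arguments depth : simpl never.

Lemma box_uniq k (L n : latt k) : uniq (box L n).
Proof. exact: undup_uniq. Qed.

Lemma mem_box k (L n x : latt k) : (x \in box L n) = leN L x && leN x n.
Proof.
rewrite mem_undup mem_filter; apply/andP/idP => [[]//|H]; split => //.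
case/andP: H => h1 h2.
apply/mapP; exists [ffun i => inord (absz (x 0 i - L 0 i)%R) : 'I_(depth L n).+1].
  by rewrite mem_enum.
apply/rowP => i; rewrite !mxE ffunE inordK; last first.
  by rewrite ltnS; apply: leq_trans (absz_le i h1 h2) (depth_le_term _ _ _).
rewrite abszE ger0_norm ?subr_ge0; last by move/forallP: h1.
by rewrite addrC subrK.
Qed.

Lemma sum_supp (K : fieldType) (J : eqType) (x : J -> K) (F1 F2 : seq J) :
  uniq F1 -> uniq F2 -> (forall j, x j != 0 -> j \in F1) ->
  (forall j, x j != 0 -> j \in F2) ->
  \sum_(j <- F1) x j = \sum_(j <- F2) x j.
Proof.
move=> u1 u2 h1 h2.
have E F : \sum_(j <- F) x j = \sum_(j <- [seq j <- F | x j != 0]) x j.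
  rewrite big_filter [RHS]big_mkcond; apply: eq_bigr => j _.
  by case: ifP => // /negbFE/eqP ->.
rewrite E [RHS]E; apply: perm_big; apply: uniq_perm; rewrite ?filter_uniq //.
move=> j; rewrite !mem_filter; case: (boolP (x j != 0)) => //= hj.
by rewrite h1 ?h2.
Qed.

Lemma sum_nz (K : fieldType) (J : eqType) (x : J -> K) (F : seq J) :
  \sum_(j <- F) x j != 0 -> exists j, x j != 0.
Proof.
elim: F => [|a F IH]; first by rewrite big_nil eqxx.
rewrite big_cons; case: (boolP (x a == 0)) => [/eqP ->|h _]; last by exists a.
by rewrite add0r.
Qed.

Definition fam (K : fieldType) k (B : 'M[int]_k) (theta : latt k -> Aelt K k)
  (b : latt k * latt k -> K) : latt k * latt k -> Aelt K k :=
  fun q => shiftA (- (q.2 *m B)) q.2 (scaleA (b q) (theta q.1)).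

Lemma fam_val (K : fieldType) k (B : 'M[int]_k) (theta : latt k -> Aelt K k) b q g n :
  fam B theta b q g n = b q * theta q.1 (g + q.2 *m B) (n - q.2).
Proof. by rewrite /fam /shiftA /scaleA opprK. Qed.

Lemma fam_supp (K : fieldType) k (B : 'M[int]_k) (theta : latt k -> Aelt K k)
  (Hz : forall m, in_zm_series m (theta m)) b q g n :
  fam B theta b q g n != 0 -> [/\ b q != 0, q.1 = g + q.2 *m B & leN q.2 n].
Proof.
rewrite fam_val mulf_eq0 negb_or => /andP[h1 /Hz[h2 h3]].
by split => //; rewrite -leN0B.
Qed.

Lemma fam_diag (K : fieldType) k (B : 'M[int]_k) (theta : latt k -> Aelt K k)
  (H1 : forall m, theta m m 0 = 1) b q :
  fam B theta b q (q.1 - q.2 *m B) q.2 = b q.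
Proof. by rewrite fam_val subrK subrr H1 mulr1. Qed.

Lemma sum_box (K : fieldType) k (B : 'M[int]_k) (theta : latt k -> Aelt K k)
  (Hz : forall m, in_zm_series m (theta m)) b v (L : latt k) :
  sums_to (fam B theta b) v -> (forall q, b q != 0 -> leN L q.2) ->
  forall g n, v g n = \sum_(n' <- box L n) fam B theta b (g + n' *m B, n') g n.
Proof.
move=> [_ [_ H3]] HL g n.
have [F [uF sF ->]] := H3 g n.
rewrite -(big_map (fun n' => (g + n' *m B, n')) predT (fun j => fam B theta b j g n)).
apply: sum_supp => //.
  by rewrite map_inj_uniq ?box_uniq // => x y /(congr1 snd).
move=> [m n'] /(fam_supp Hz) [hb /= -> hn]; apply/mapP; exists n' => //.
by rewrite mem_box hn (HL _ hb).
Qed.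

Lemma can_wf (K : fieldType) k (B : 'M[int]_k) (theta : latt k -> Aelt K k)
  (Hz : forall m, in_zm_series m (theta m)) v : in_can B theta v ->
  exists (S : seq (latt k)) (L : latt k), forall m n, v m n != 0 -> m \in S /\ leN L n.
Proof.
elim=> {v}.
- move=> m; exists [:: m], 0 => m' n /Hz [-> h]; by rewrite mem_seq1 eqxx.
- move=> n; exists [:: - (n *m B)], n => m' n'; rewrite /sigmaA /mono.
  case: ifP => [/andP[/eqP -> /eqP ->] _|]; last by rewrite eqxx.
  by rewrite mem_seq1 eqxx leN_refl.
- move=> c v _ [S [L H]]; exists S, L => m n.
  by rewrite /scaleA mulf_eq0 negb_or => /andP[_ /H].
- move=> u v _ [S1 [L1 H1]] _ [S2 [L2 H2]]; exists (S1 ++ S2), (minL L1 L2) => m n.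
  rewrite /Defs.addA /= mem_cat; case: (boolP (u m n == 0)) => [/eqP -> | /H1 [h1 h2] _].
    by rewrite add0r => /H2 [-> h]; rewrite orbT minL_r.
  by rewrite h1 minL_l.
- move=> u v w _ _ _ _ [[S HS] [[L HL] H3]]; exists S, L => m n hw.
  have [F [_ _ E]] := H3 m n.
  move: hw; rewrite E => /sum_nz [j hj].
  by split; [apply: HS hj | apply: HL hj].
Qed.

Fixpoint rec (K : fieldType) k (B : 'M[int]_k) (theta : latt k -> Aelt K k)
  (v : Aelt K k) (L : latt k) (f : nat) (g n : latt k) {struct f} : K :=
  if f is f'.+1 then
    v g n - \sum_(n' <- box L n | n' != n)
       rec B theta v L f' g n' * theta (g + n' *m B) (g + n' *m B) (n - n')
  else 0.

Lemma recS (K : fieldType) k (B : 'M[int]_k) (theta : latt k -> Aelt K k) v L f g n :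
  rec B theta v L f.+1 g n = v g n - \sum_(n' <- box L n | n' != n)
       rec B theta v L f g n' * theta (g + n' *m B) (g + n' *m B) (n - n').
Proof. by []. Qed.

Arguments rec : simpl never.

Lemma rec_fuel (K : fieldType) k (B : 'M[int]_k) (theta : latt k -> Aelt K k) v L g :
  forall f f' n, (depth L n < f)%N -> (depth L n < f')%N ->
  rec B theta v L f g n = rec B theta v L f' g n.
Proof.
elim=> [|f IH] f' n h1 h2; first by rewrite ltn0 in h1.
case: f' h2 => [|f'] h2; first by rewrite ltn0 in h2.
rewrite !recS.
congr (_ - _); rewrite big_seq_cond [RHS]big_seq_cond; apply: eq_bigr => n' /andP[hn' ne].
move: hn'; rewrite mem_box => /andP[a1 a2].
have hd := depth_lt a1 a2 ne.
congr (_ * _); apply: IH; apply: leq_trans hd _; by rewrite -ltnS.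
Qed.


Definition acoef (K : fieldType) k (B : 'M[int]_k) (theta : latt k -> Aelt K k)
  (v : Aelt K k) (S : seq (latt k)) (L : latt k) (q : latt k * latt k) : K :=
  if ((q.1 - q.2 *m B) \in S) && leN L q.2 then
    rec B theta v L (depth L q.2).+1 (q.1 - q.2 *m B) q.2 else 0.


Lemma exist_exp (K : fieldType) k (B : 'M[int]_k) (theta : latt k -> Aelt K k)
  (Hz : forall m, in_zm_series m (theta m)) (H1 : forall m, theta m m 0 = 1)
  v S L (hv : forall m n, v m n != 0 -> m \in S /\ leN L n) :
  sums_to (fam B theta (acoef B theta v S L)) v.
Proof.
have ac0 q : acoef B theta v S L q != 0 -> ((q.1 - q.2 *m B) \in S) && leN L q.2.
  by rewrite /acoef; case: ifP => //; rewrite eqxx.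
split; last split.
- exists S => j m n /(fam_supp Hz) [/ac0 /andP[hS _] E _].
  by rewrite E addrK in hS.
- exists L => j m n /(fam_supp Hz) [/ac0 /andP[_ hL] _ hn].
  exact: leN_trans hL hn.
move=> g n; exists (map (fun n' => (g + n' *m B, n')) (box L n)); split.
- by rewrite map_inj_uniq ?box_uniq // => x y /(congr1 snd).
- move=> [m n'] /(fam_supp Hz) [/ac0 /andP[_ hL] /= -> hn]; apply/mapP; exists n' => //.
  by rewrite mem_box hn hL.
rewrite big_map.
have Ev n' : fam B theta (acoef B theta v S L) (g + n' *m B, n') g n =
   (if (g \in S) && leN L n' then rec B theta v L (depth L n').+1 g n' else 0)
     * theta (g + n' *m B) (g + n' *m B) (n - n').
  by rewrite fam_val /acoef /= addrK.
under eq_bigr => n' _ do rewrite Ev.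
case: (boolP ((g \in S) && leN L n)) => hg.
- have hn : n \in box L n by rewrite mem_box leN_refl (andP hg).2.
  rewrite (bigD1_seq n) ?box_uniq //= hg subrr H1 mulr1 recS.
  set R := (X in _ = _ + X).
  have -> : R = \sum_(n' <- box L n | n' != n)
       rec B theta v L (depth L n) g n' * theta (g + n' *m B) (g + n' *m B) (n - n').
    rewrite /R big_seq_cond [RHS]big_seq_cond; apply: eq_bigr => n' /andP[hn' ne].
    move: hn'; rewrite mem_box => /andP[a1 a2].
    rewrite (andP hg).1 a1 /=; congr (_ * _); apply: rec_fuel => //.
    exact: depth_lt a1 a2 ne.
  by rewrite subrK.
- have -> : v g n = 0.
    by apply/eqP; apply: contraNT hg => /hv [-> ->].
  rewrite big_seq; apply/esym; apply: big1 => n'; rewrite mem_box => /andP[a1 a2].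
  case: ifP => [/andP[hS _]|]; last by rewrite mul0r.
  by move: hg; rewrite hS (leN_trans a1 a2).
Qed.

Lemma bound_of (K : fieldType) k (B : 'M[int]_k) (theta : latt k -> Aelt K k)
  (H1 : forall m, theta m m 0 = 1) b v :
  sums_to (fam B theta b) v -> exists L : latt k, forall q, b q != 0 -> leN L q.2.
Proof.
move=> [_ [[L HL] _]]; exists L => q hq.
by apply: (HL q (q.1 - q.2 *m B)); rewrite fam_diag.
Qed.

Lemma uniq_exp (K : fieldType) k (B : 'M[int]_k) (theta : latt k -> Aelt K k)
  (Hz : forall m, in_zm_series m (theta m)) (H1 : forall m, theta m m 0 = 1) a b v :
  sums_to (fam B theta a) v -> sums_to (fam B theta b) v -> forall q, b q = a q.
Proof.
move=> ha hb.
have [La hLa] := bound_of H1 ha.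
have [Lb hLb] := bound_of H1 hb.
pose L := minL La Lb.
have hLa' q : a q != 0 -> leN L q.2 by move/hLa; apply: minL_l.
have hLb' q : b q != 0 -> leN L q.2 by move/hLb; apply: minL_r.
have Ea := sum_box Hz ha hLa'.
have Eb := sum_box Hz hb hLb'.
have claim g N : forall n, (depth L n < N)%N -> b (g + n *m B, n) = a (g + n *m B, n).
  elim: N => [|N IH] n hN; first by rewrite ltn0 in hN.
  case: (boolP (leN L n)) => hn; last first.
    have -> : b (g + n *m B, n) = 0 by apply/eqP; apply: contraNT hn => /hLb'.
    have -> : a (g + n *m B, n) = 0 by apply/eqP; apply: contraNT hn => /hLa'.
    done.
  have hnb : n \in box L n by rewrite mem_box leN_refl hn.
  have := Eb g n; rewrite Ea (bigD1_seq n) ?box_uniq // [RHS](bigD1_seq n) ?box_uniq //.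
  set Ra := (X in _ + X = _); set Rb := (X in _ = _ + X).
  have -> : Ra = Rb.
    rewrite /Ra /Rb big_seq_cond [RHS]big_seq_cond; apply: eq_bigr => n' /andP[hn' ne].
    move: hn'; rewrite mem_box => /andP[a1 a2].
    rewrite !fam_val /= IH //.
    apply: leq_trans (depth_lt a1 a2 ne) _; by rewrite -ltnS.
  move/addIr; rewrite !fam_val /= subrr H1 !mulr1 => ->.
  done.
move=> [m n].
have := claim (m - n *m B) _ n (ltnSn _); by rewrite subrK.
Qed.

Theorem mainTheorem4 (K : fieldType) (k l : nat) (B : 'M[int]_k)
    (Bfr : 'M[int]_(k, l)) (d : 'I_k -> nat) :
  [pchar K] =i pred0 ->
  skew_symmetrizable B d ->
  nondegenerate_coeffs Bfr ->
  forall theta : latt k -> Aelt K k,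
    theta_props B theta ->
    reduced_basis B (in_can B theta) theta.
Proof.
move=> _ _ _ theta [Hth _].
have Hz m : in_zm_series m (theta m) by case: (Hth m).
have H1 m : theta m m 0 = 1 by case: (Hth m).
split => //; first exact: can_theta.
move=> v /(can_wf Hz) [S [L hv]].
have ex := @exist_exp _ _ B theta Hz H1 v S L hv.
exists (acoef B theta v S L); split; first exact: ex.
move=> b hb q; exact: (@uniq_exp _ _ B theta Hz H1 _ b v ex hb).
Qed.
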